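(* Let $A,B\in \mathbb{R}^{m\times n}$ with $m<n$ and $b\in \mathbb{R}^m$. Suppose that the equation $Ax-B|x|=b$ has a solution $x_*$ and let $s=\operatorname{sign}(x_* )\in\{-1,0,1\}^n$ (entrywise). Let $C=A\operatorname{diag}(s)-B$. Suppose that $x_*$ has no fewer than $\operatorname{rank}(C)$ nonzero entries, and that there are index sets $\mathbb{I}_1\subseteq\{1,\dots,m\}$, $\mathbb{I}_2\subseteq\{1,\dots,n\}$ with $\operatorname{card}(\mathbb{I}_1)=\operatorname{card}(\mathbb{I}_2)=\operatorname{rank}(C)$ such that $C_{(\mathbb{I}_1,\mathbb{I}_2)}$ is nonsingular and $x_{*\mathbb{I}_2}$ has no zero entry. Let $\mathbb{I}_2^{c}=\{1,\dots,n\}\setminus\mathbb{I}_2$. (a) If not all entries of $x_{*\mathbb{I}_2^{c}}$ are $0$, then $Ax-B|x|=b$ has infinitely many solutions with the same sign pattern as $x_*$. (b) $Ax-B|x|=b$ has infinitely many solutions $x$ such that $x_{\mathbb{I}_2}$ has the same sign pattern as $x_{*\mathbb{I}_2}$. (c) If $x_{*\mathbb{I}_2^{c}}=0$, then $Ax-B|x|=b$ has no solution other than $x_*$ with the same sign pattern as $x_*$.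
   Context: $|x|$ is the entrywise absolute value; $\operatorname{diag}(s)$ is the diagonal matrix with diagonal $s$. $\operatorname{sign}(r)=1,0,-1$ for $r>0,r=0,r<0$. A vector $x$ has sign pattern $s$ if $\operatorname{sign}(x_{(i)})=s_{(i)}$ for all $i$. $X_{(\mathbb{I}_1,\mathbb{I}_2)}$ is the submatrix with rows in $\mathbb{I}_1$ and columns in $\mathbb{I}_2$; $x_{\mathbb{I}}$ is the subvector with indices in $\mathbb{I}$; $\operatorname{card}$ is cardinality. *)

(* Defs.v *)
From HB Require Import structures.
From mathcomp Require Import all_boot all_order all_algebra.
Set Implicit Arguments. Unset Strict Implicit. Unset Printing Implicit Defensive.
Import Order.TTheory GRing.Theory Num.Theory.
Local Open Scope ring_scope.

Definition absv (R : numDomainType) (n : nat) (x : 'cV[R]_n) : 'cV[R]_n :=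
  map_mx (fun r => `|r|) x.

Definition sgv (R : numDomainType) (n : nat) (x : 'cV[R]_n) : 'cV[R]_n :=
  map_mx (fun r => Num.sg r) x.

Definition diagv (R : numDomainType) (n : nat) (s : 'cV[R]_n) : 'M[R]_n :=
  diag_mx s^T.

Definition avesol (R : numDomainType) (m n : nat) (A B : 'M[R]_(m, n))
  (b : 'cV[R]_m) (x : 'cV[R]_n) : Prop :=
  A *m x - B *m absv x = b.

(* submatrix X_(I1, I2), rows/columns taken in increasing index order *)
Definition submxI (R : Type) (m n : nat) (X : 'M[R]_(m, n))
  (I1 : {set 'I_m}) (I2 : {set 'I_n}) : 'M[R]_(#|I1|, #|I2|) :=
  \matrix_(i, j) X (enum_val i) (enum_val j).

Definition sub_nonsingular (R : fieldType) (m n : nat) (X : 'M[R]_(m, n))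
  (I1 : {set 'I_m}) (I2 : {set 'I_n}) : Prop :=
  exists e : #|I1| = #|I2|, castmx (e, erefl) (submxI X I1 I2) \in unitmx.

Definition infinitely_many (T : eqType) (P : T -> Prop) : Prop :=
  forall s : seq T, exists x, P x /\ x \notin s.

(* Main.v *)
Require Import Defs.
From HB Require Import structures.
From mathcomp Require Import all_boot all_order all_algebra.
From mathcomp Require Import ring lra zify.
Import Order.TTheory GRing.Theory Num.Theory.
Local Open Scope ring_scope.
Set Implicit Arguments. Unset Strict Implicit.
From mathcomp Require Import zify.
Definition selP (R : fieldType) n (S : {set 'I_n}) : 'M[R]_(n, #|S|) :=
  colsub (fun j : 'I_#|S| => enum_val j) 1%:M.

Arguments selP {R n} S.

Lemma selP_supp (R : fieldType) n (S : {set 'I_n}) (y : 'cV[R]_#|S|) i :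
  i \notin S -> (selP S *m y) i 0 = 0.
Proof.
move=> Hi; rewrite mxE big1 // => j _; rewrite !mxE.
have -> : (i == enum_val j) = false.
  by apply/negbTE; apply: contraNneq Hi => ->; apply: enum_valP.
by rewrite mul0r.
Qed.

Lemma selP_left (R : fieldType) n (S : {set 'I_n}) (y : 'cV[R]_#|S|) :
  rowsub (fun j : 'I_#|S| => enum_val j) (selP S *m y) = y.
Proof.
apply/matrixP => j k; rewrite !mxE (bigD1 j) //= big1 ?addr0.
  by rewrite !mxE eqxx mul1r (ord1 k).
move=> j' Hj'; rewrite !mxE.
have -> : (enum_val j == enum_val j' :> 'I_n) = false.
  by apply/negbTE; apply: contra Hj' => /eqP /enum_val_inj ->.
by rewrite mul0r.
Qed.

Lemma selP_right (R : fieldType) n (S : {set 'I_n}) (f : 'cV[R]_n) :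
  (forall i, i \notin S -> f i 0 = 0) ->
  selP S *m rowsub (fun j : 'I_#|S| => enum_val j) f = f.
Proof.
move=> Hf; apply/matrixP => i k; rewrite (ord1 k).
case: (boolP (i \in S)) => Hi; last by rewrite selP_supp // Hf.
rewrite mxE (bigD1 (enum_rank_in Hi i)) //= big1 ?addr0.
  by rewrite !mxE enum_rankK_in // eqxx mul1r.
move=> j' Hj'; rewrite !mxE.
have -> : (i == enum_val j') = false.
  apply/negbTE; apply: contra Hj' => /eqP Hie.
  by apply/eqP; apply: enum_val_inj; rewrite enum_rankK_in.
by rewrite mul0r.
Qed.
Lemma cast_unit (R : fieldType) k l (M : 'M[R]_(k, l)) (e : k = l) :
  castmx (e, erefl) M \in unitmx ->
  \rank M = l /\ forall y : 'cV_l, M *m y = 0 -> y = 0.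
Proof.
subst k; rewrite castmx_id => U; split; first exact: mxrank_unit.
by move=> y H; rewrite -(mulKmx U y) H mulmx0.
Qed.

Lemma submxI_mul (R : fieldType) m n (C : 'M[R]_(m, n)) (I1 : {set 'I_m}) (I2 : {set 'I_n}) :
  submxI C I1 I2 =
  rowsub (fun i : 'I_#|I1| => enum_val i) 1%:M *m (C *m selP I2).
Proof.
apply/matrixP => i j; rewrite mul_rowsub_mx mul1mx mulmx_colsub mulmx1 !mxE //.
Qed.

Lemma colspan (R : fieldType) m n (C : 'M[R]_(m, n)) (I1 : {set 'I_m}) (I2 : {set 'I_n}) :
  #|I2| = \rank C -> sub_nonsingular C I1 I2 -> forall z : 'cV_n,
  exists2 w : 'cV_n, (forall i, i \notin I2 -> w i 0 = 0) & C *m w = C *m z.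
Proof.
move=> Hr [e U] z; have [Hrk _] := cast_unit U.
have Hs : ((C *m selP I2)^T <= C^T)%MS by rewrite trmx_mul submxMl.
have HCP : (C^T <= (C *m selP I2)^T)%MS.
  move: (mxrank_leqif_sup Hs) => [_ <-].
  rewrite !mxrank_tr eqn_leq mxrankM_maxl /=.
  by rewrite -{1}Hr -{1}Hrk submxI_mul mxrankM_maxr.
have : (z^T *m C^T <= (C *m selP I2)^T)%MS by apply: submx_trans (submxMl _ _) HCP.
case/submxP => D HD.
exists (selP I2 *m D^T); first by move=> i Hi; rewrite selP_supp.
apply: trmx_inj; rewrite mulmxA trmx_mul trmxK -HD trmx_mul.
by [].
Qed.

Lemma supp_inj (R : fieldType) m n (C : 'M[R]_(m, n)) (I1 : {set 'I_m}) (I2 : {set 'I_n}) :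
  sub_nonsingular C I1 I2 -> forall f : 'cV_n,
  (forall i, i \notin I2 -> f i 0 = 0) -> C *m f = 0 -> f = 0.
Proof.
move=> [e U] f Hf Hc; have [_ Hinj] := cast_unit U.
rewrite -(selP_right Hf).
have -> : rowsub (fun j : 'I_#|I2| => enum_val j) f = 0; last by rewrite mulmx0.
apply: Hinj; by rewrite submxI_mul -!mulmxA selP_right // Hc mulmx0.
Qed.

Lemma kernel_vec (R : fieldType) m n (A C : 'M[R]_(m, n)) (I2 : {set 'I_n}) :
  (m < n)%N -> #|I2| = \rank C ->
  exists v : 'cV_n, [/\ v != 0, (forall i, i \in I2 -> v i 0 = 0) &
     exists z, A *m v = C *m z].
Proof.
move=> Hmn Hr.
pose K := (A *m selP (~: I2))^T *m cokermx C^T.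
have HK : ~~ row_free K.
  rewrite /row_free; apply/negP => /eqP HK.
  have := mxrankM_maxr (A *m selP (~: I2))^T (cokermx C^T).
  rewrite -/K HK mxrank_coker mxrank_tr -Hr.
  have := cardsC I2; rewrite card_ord => Hc.
  have Hle : (#|I2| <= m)%N by rewrite Hr rank_leq_row.
  lia.
have : kermx K != 0 by rewrite kermx_eq0.
case/rowV0Pn => v' /sub_kermxP Hv' Hv'0.
have : (v' *m (A *m selP (~: I2))^T <= C^T)%MS by rewrite submxE -mulmxA -/K Hv'.
case/submxP => D HD.
exists (selP (~: I2) *m v'^T); split.
- apply: contra Hv'0 => /eqP H0.
  by rewrite -trmx_eq0 -(selP_left v'^T) H0; apply/eqP/matrixP => i j; rewrite !mxE.
- by move=> i Hi; rewrite selP_supp // inE Hi.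
- exists D^T; apply: trmx_inj; rewrite mulmxA !trmx_mul !trmxK.
by rewrite -HD trmx_mul.
Qed.
Lemma L_sg (R : realFieldType) (x y : R) : `|y| < `|x| ->
  Num.sg (x + y) = Num.sg x /\ `|x + y| = `|x| + Num.sg x * y.
Proof.
move=> H; case: (ltgtP x 0) => Hx.
- have Hxy : x + y < 0.
    move: H; rewrite (ltr0_norm Hx) ltr_norml => /andP[_ ?]; lra.
  by rewrite (ltr0_sg Hx) (ltr0_sg Hxy) (ltr0_norm Hx) (ltr0_norm Hxy); split => //; lra.
- have Hxy : 0 < x + y.
    move: H; rewrite (gtr0_norm Hx) ltr_norml => /andP[? _]; lra.
  by rewrite (gtr0_sg Hx) (gtr0_sg Hxy) (gtr0_norm Hx) (gtr0_norm Hxy); split => //; lra.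
- by move: H; rewrite Hx normr0 ltNge normr_ge0.
Qed.

Lemma inf_mono (T : eqType) (P Q : T -> Prop) :
  (forall x, P x -> Q x) -> infinitely_many P -> infinitely_many Q.
Proof. by move=> H HP s; have [x [Px Hx]] := HP s; exists x; split => //; apply: H. Qed.

Lemma inf_seq (T : eqType) (P : T -> Prop) (f : nat -> T) :
  injective f -> (forall k, P (f k)) -> infinitely_many P.
Proof.
move=> Hf HP s.
case Hh: (has (fun x => x \notin s) (map f (iota 0 (size s).+1))).
  case/hasP: Hh => x /mapP [k _ ->] Hk; by exists (f k).
exfalso; move/negbT: Hh; rewrite -all_predC => /allP Hall.
have Hsub : {subset map f (iota 0 (size s).+1) <= s}.
  by move=> x Hx; have := Hall x Hx; rewrite /= negbK.
have := uniq_leq_size _ Hsub.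
rewrite map_inj_uniq ?iota_uniq // size_map size_iota => /(_ isT).
by rewrite ltnn.
Qed.

Lemma perturb (R : realFieldType) m n (A B : 'M[R]_(m, n)) b (xs d : 'cV[R]_n) :
  avesol A B b xs -> d != 0 ->
  A *m d = B *m (\col_i (if xs i 0 == 0 then `|d i 0| else Num.sg (xs i 0) * d i 0)) ->
  infinitely_many (fun x => avesol A B b x /\ (exists2 t, 0 < t & x = xs + t *: d) /\
     (forall i, xs i 0 != 0 -> Num.sg (x i 0) = Num.sg (xs i 0))).
Proof.
move=> Hs Hd0 Hd.
set e := \col_i _ in Hd.
pose M := \sum_i (if xs i 0 == 0 then 0 else `|d i 0| / `|xs i 0|).
have HM0 : 0 <= M.
  apply: sumr_ge0 => i _; case: ifP => // _; by rewrite divr_ge0.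
have HMi : forall i, xs i 0 != 0 -> `|d i 0| <= M * `|xs i 0|.
  move=> i Hi; have Hp : 0 < `|xs i 0| by rewrite normr_gt0.
  rewrite -ler_pdivrMr //.
  rewrite /M (bigD1 i) //= (negbTE Hi) lerDl.
  apply: sumr_ge0 => j _; case: ifP => // _; by rewrite divr_ge0.
pose del := (1 + M)^-1.
have Hdel : 0 < del by rewrite invr_gt0; lra.
have Hsmall : forall t, 0 < t -> t <= del -> forall i, xs i 0 != 0 ->
    `|t * d i 0| < `|xs i 0|.
  move=> t Ht Htd i Hi; have Hp : 0 < `|xs i 0| by rewrite normr_gt0.
  have := HMi i Hi; rewrite normrM (gtr0_norm Ht) => H1.
  have H2 : t * `|d i 0| <= del * `|d i 0| by rewrite ler_wpM2r.
  have H3 : del * `|d i 0| < `|xs i 0|.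
    rewrite mulrC ltr_pdivrMr; last lra.
    nra.
  lra.
have Hgood : forall t, 0 < t -> t <= del ->
    avesol A B b (xs + t *: d) /\ (exists2 t', 0 < t' & xs + t *: d = xs + t' *: d) /\
     (forall i, xs i 0 != 0 -> Num.sg ((xs + t *: d) i 0) = Num.sg (xs i 0)).
  move=> t Ht Htd.
  have Habs : absv (xs + t *: d) = absv xs + t *: e.
    apply/matrixP => i j; rewrite (ord1 j) !mxE.
    case: eqP => Hi.
      by rewrite Hi normr0 add0r normrM (gtr0_norm Ht) add0r.
    have [_ ->] := L_sg (Hsmall t Ht Htd i (introN eqP Hi)).
    by rewrite mulrCA.
  split; [|split].
  - rewrite /avesol Habs !mulmxDr -!scalemxAr Hd -Hs opprD addrACA subrr addr0 //.
  - by exists t.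
  - move=> i Hi; rewrite !mxE.
    by have [-> _] := L_sg (Hsmall t Ht Htd i Hi).
pose f k := xs + (del / (k.+1)%:R) *: d.
have Hk : forall k : nat, 0 < del / (k.+1)%:R /\ del / (k.+1)%:R <= del.
  move=> k; have Hk1 : (1 <= (k.+1)%:R :> R) by rewrite ler1n.
  split; first by rewrite divr_gt0 // ltr0n.
  rewrite ler_pdivrMr; last lra.
  nra.
apply: (@inf_seq _ _ f).
  move=> k1 k2; rewrite /f => /addrI /eqP.
  rewrite -subr_eq0 -scalerBl scaler_eq0 (negbTE Hd0) orbF subr_eq0 => /eqP H.
  move: H => /(mulfI (lt0r_neq0 Hdel)) /invr_inj /eqP.
  by rewrite eqr_nat => /eqP [].
by move=> k; have [H1 H2] := Hk k; apply: Hgood.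
Qed.

Unset Implicit Arguments.

Lemma diagv_mul (R : realFieldType) n (s v : 'cV[R]_n) i :
  (diagv s *m v) i 0 = s i 0 * v i 0.
Proof. by rewrite /diagv mul_diag_mx !mxE. Qed.

Lemma sg_sq (R : realFieldType) (x y : R) : x != 0 -> Num.sg x * (Num.sg x * y) = y.
Proof. by move=> Hx; rewrite mulrA -expr2 sqr_sg Hx mul1r. Qed.

Theorem theorem3p3 (R : realFieldType) (m n : nat) (A B : 'M[R]_(m, n))
  (b : 'cV[R]_m) (xs : 'cV[R]_n) (I1 : {set 'I_m}) (I2 : {set 'I_n}) :
  (m < n)%N ->
  avesol A B b xs ->
  let s := sgv xs in
  let C := A *m diagv s - B in
  (\rank C <= #|[set i | (xs i ord0 != 0)%R]|)%N ->
  #|I1| = \rank C -> #|I2| = \rank C ->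
  sub_nonsingular C I1 I2 ->
  (forall i, i \in I2 -> xs i ord0 != 0) ->
  [/\ ((exists2 i, i \in ~: I2 & xs i ord0 != 0) ->
         infinitely_many (fun x => avesol A B b x /\ sgv x = s)),
      infinitely_many (fun x => avesol A B b x /\
         (forall i, i \in I2 -> Num.sg (x i ord0) = Num.sg (xs i ord0)))
    & ((forall i, i \in ~: I2 -> xs i ord0 = 0) ->
         forall x, avesol A B b x -> sgv x = s -> x = xs)].
Proof.
move=> Hmn Hsol s C _ HI1 HI2 Hns Hnz.
have sE : forall i, s i 0 = Num.sg (xs i 0) by move=> i; rewrite mxE.
have eqC : forall y : 'cV_n, sgv y = s -> A *m y - B *m absv y = C *m absv y.
  move=> y Hy; rewrite /C mulmxBl -mulmxA; congr (A *m _ - _).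
  apply/matrixP => i j; rewrite (ord1 j) diagv_mul -Hy !mxE mulr_sg_norm //.
have CW : forall w : 'cV_n, A *m (diagv s *m w) = C *m w + B *m w.
  by move=> w; rewrite /C mulmxBl -mulmxA subrK.
have partA : (exists2 i, i \in ~: I2 & xs i ord0 != 0) ->
         infinitely_many (fun x => avesol A B b x /\ sgv x = s).
  case=> i0 Hi0 Hxi0.
  have [w Hw HCw] := colspan HI2 Hns (- delta_mx i0 0).
  pose f := w - (- delta_mx i0 0 : 'cV_n).
  have Cf : C *m f = 0 by rewrite /f mulmxBr HCw subrr.
  have fE : forall i, xs i 0 = 0 -> f i 0 = 0.
    move=> i Hi; have HiI : i \notin I2.
      by apply/negP => /Hnz; rewrite Hi eqxx.
    rewrite /f !mxE Hw // opprK add0r.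
    have -> : (i == i0) = false.
      by apply/negbTE/negP => /eqP Hii; move: Hxi0; rewrite -Hii Hi eqxx.
    by [].
  pose d := diagv s *m f.
  have Hd0 : d != 0.
    apply/negP => /eqP Hd; have := congr1 (fun M : 'cV[R]_n => M i0 0) Hd.
    rewrite /d diagv_mul /f !mxE Hw; last by rewrite inE in Hi0.
    rewrite !eqxx opprK add0r mulr1n mulr1.
    by move/eqP; rewrite sgr_eq0 (negbTE Hxi0).
  have He : (\col_i (if xs i 0 == 0 then `|d i 0| else Num.sg (xs i 0) * d i 0)) = f.
    apply/matrixP => i j; rewrite (ord1 j) mxE.
    case: eqP => Hi.
      by rewrite /d diagv_mul fE // mulr0 normr0.
    by rewrite /d diagv_mul sE sg_sq //; apply/eqP.
  have := perturb Hsol Hd0; rewrite He /d CW Cf add0r => /(_ erefl).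
  apply: inf_mono => x [Hx [[t Ht Ex] Hsg]]; split => //; subst x.
  apply/matrixP => i j; rewrite (ord1 j).
  have Ex : (xs + t *: d) i 0 = xs i 0 + t * d i 0 by rewrite !mxE.
  case: (boolP (xs i 0 == 0)) => Hi.
    have Edi : d i 0 = 0 by rewrite /d diagv_mul fE ?mulr0 //; exact/eqP.
    by rewrite sE mxE Ex Edi mulr0 addr0.
  by rewrite sE mxE Hsg.
split => //.
- case: (boolP [exists i, (i \in ~: I2) && (xs i 0 != 0)]).
    case/existsP => i /andP [H1 H2].
    apply: inf_mono (partA (ex_intro2 _ _ i H1 H2)) => x [Hx Hs]; split => //.
    by move=> i' _; have := congr1 (fun M : 'cV[R]_n => M i' 0) Hs; rewrite mxE sE.
  rewrite negb_exists => /forallP H0.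
  have H0' : forall i, i \notin I2 -> xs i 0 = 0.
    move=> i Hi; have := H0 i; rewrite inE Hi /= negbK => /eqP //.
  have [v [Hv0 HvI [z Hz]]] := kernel_vec A Hmn HI2.
  have [w Hw HCw] := colspan HI2 Hns (- absv v - z).
  pose d := diagv s *m w + v.
  have dE : forall i, d i 0 = s i 0 * w i 0 + v i 0.
    by move=> i; rewrite /d [LHS]mxE diagv_mul.
  have Hd0 : d != 0.
    apply: contra Hv0 => /eqP Hd; apply/eqP/matrixP => i j; rewrite (ord1 j).
    have := congr1 (fun M : 'cV[R]_n => M i 0) Hd; rewrite dE !mxE.
    case: (boolP (i \in I2)) => Hi; first by rewrite HvI.
    by rewrite Hw // mulr0 add0r.
  have He : (\col_i (if xs i 0 == 0 then `|d i 0| else Num.sg (xs i 0) * d i 0))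
            = w + absv v.
    apply/matrixP => i j; rewrite (ord1 j) mxE dE [in RHS]mxE [in RHS]mxE.
    case: eqP => Hi.
      have HiI : i \notin I2 by apply/negP => /Hnz; rewrite Hi eqxx.
      by rewrite Hw // mulr0 add0r add0r.
    have HiI : i \in I2.
      by apply: contraNT (introN eqP Hi) => /H0' ->.
    by rewrite HvI // addr0 normr0 addr0 sE sg_sq //; apply/eqP.
  have HCv : C *m absv v = - (B *m absv v).
    rewrite /C mulmxBl -mulmxA.
    have -> : diagv s *m absv v = 0.
      apply/matrixP => i j; rewrite (ord1 j) diagv_mul !mxE.
      case: (boolP (i \in I2)) => Hi; first by rewrite HvI // normr0 mulr0.
      by rewrite H0' // sgr0 mul0r.
    by rewrite mulmx0 sub0r.
  have Hd : A *m d = B *m (w + absv v).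
    rewrite /d mulmxDr CW Hz HCw mulmxDr mulmxN mulmxDr HCv opprK mulmxN.
    by rewrite addrAC subrK addrC.
  have := perturb Hsol Hd0; rewrite He => /(_ Hd).
  apply: inf_mono => x [Hx [_ Hsg]]; split => // i Hi.
  exact: Hsg (Hnz i Hi).
- move=> H0 x Hx Hsx.
  have H0' : forall i, i \notin I2 -> xs i 0 = 0.
    by move=> i Hi; apply: H0; rewrite inE.
  pose f := absv x - absv xs.
  have Cf : C *m f = 0.
    by rewrite /f mulmxBr -eqC // -eqC // Hx Hsol subrr.
  have fsupp : forall i, i \notin I2 -> f i 0 = 0.
    move=> i Hi; rewrite /f !mxE H0' // normr0 subr0.
    have := congr1 (fun M : 'cV[R]_n => M i 0) Hsx; rewrite mxE sE H0' // sgr0.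
    by move/eqP; rewrite sgr_eq0 => /eqP ->; rewrite normr0.
  have := supp_inj Hns fsupp Cf; rewrite /f => /eqP; rewrite subr_eq0 => /eqP Habs.
  apply/matrixP => i j; rewrite (ord1 j).
  have Hsi : Num.sg (x i 0) = Num.sg (xs i 0).
    by have := congr1 (fun M : 'cV[R]_n => M i 0) Hsx; rewrite mxE sE.
  have Hai : `|x i 0| = `|xs i 0|.
    by have := congr1 (fun M : 'cV[R]_n => M i 0) Habs; rewrite !mxE.
  by rewrite [LHS]numEsg Hsi Hai -numEsg.
Qed.
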